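(* Let $d\geq 2$ and let $\varGamma$ be a lattice in $\mathbb{R}^d$ such that $\langle x,x\rangle\in\mathbb{Q}$ for all $x\in\varGamma$, where $\langle\cdot,\cdot\rangle$ is the standard scalar product on $\mathbb{R}^d$. If $d$ is even, then $\operatorname{SOS}(\varGamma)/\operatorname{SOC}(\varGamma)$ is an elementary Abelian $2$-group. If $d$ is odd, then $\operatorname{SOS}(\varGamma)=\operatorname{SOC}(\varGamma)$. In either case, $R^2\in\operatorname{SOC}(\varGamma)$ for every $R\in\operatorname{SOS}(\varGamma)$.
   Context: A lattice in $\mathbb{R}^d$ is a subgroup of the form $\mathbb{Z}b_1\oplus\cdots\oplus\mathbb{Z}b_d$ where $\{b_1,\dots,b_d\}$ is a basis of $\mathbb{R}^d$. Two lattices $\varGamma,\varGamma'$ are commensurate, written $\varGamma\sim\varGamma'$, if $\varGamma\cap\varGamma'$ has finite index both in $\varGamma$ and in $\varGamma'$. $\operatorname{SOC}(\varGamma)=\{R\in\operatorname{SO}(d):\varGamma\sim R\varGamma\}$ and $\operatorname{SOS}(\varGamma)=\{R\in\operatorname{SO}(d):\varGamma\sim\alpha R\varGamma\text{ for some }\alpha>0\}$; these are groups and $\operatorname{SOC}(\varGamma)$ is a normal subgroup of $\operatorname{SOS}(\varGamma)$. An elementary Abelian $2$-group is a direct sum of cyclic groups of order $2$ (possibly trivial). *)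

(* Defs.v *)
From HB Require Import structures.
From mathcomp Require Import all_boot all_order all_algebra.
From mathcomp Require Import classical_sets reals.
Set Implicit Arguments. Unset Strict Implicit. Unset Printing Implicit Defensive.
Import Order.TTheory GRing.Theory Num.Theory.
Local Open Scope ring_scope.
Local Open Scope classical_set_scope.

Section Lattices.
Variables (R : realType) (d : nat).

Definition lattice_of (B : 'M[R]_d) : set 'cV[R]_d :=
  [set x | exists z : 'cV[int]_d, x = B *m map_mx (fun k : int => k%:~R) z].

Definition is_lattice (G : set 'cV[R]_d) : Prop :=
  exists B : 'M[R]_d, B \in unitmx /\ G = lattice_of B.

Definition finite_index (H G : set 'cV[R]_d) : Prop :=
  exists s : seq 'cV[R]_d, forall x, G x -> exists2 y, y \in s & H (x - y).

Definition commensurate (G G' : set 'cV[R]_d) : Prop :=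
  finite_index (G `&` G') G /\ finite_index (G `&` G') G'.

Definition is_SO (A : 'M[R]_d) : Prop := A^T *m A = 1%:M /\ \det A = 1.

Definition SOC (G : set 'cV[R]_d) : set 'M[R]_d :=
  [set A | is_SO A /\ commensurate G ((fun x => A *m x) @` G)].

Definition SOS (G : set 'cV[R]_d) : set 'M[R]_d :=
  [set A | is_SO A /\ exists2 a : R, 0 < a &
      commensurate G ((fun x => a *: (A *m x)) @` G)].

Definition rational_norms (G : set 'cV[R]_d) : Prop :=
  forall x, G x -> exists q : rat, (x^T *m x) 0 0 = ratr q.

(* The quotient group H/N (N normal in H) is an elementary Abelian 2-group,
   i.e. it is abelian and every element has order dividing 2. *)
Definition quot_elem_abelian2 (N H : set 'M[R]_d) : Prop :=
  forall A B, H A -> H B ->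
    N (A *m B *m invmx A *m invmx B) /\ N (A *m A).

End Lattices.

(* Main.v *)
Require Import Defs.
From HB Require Import structures.
From mathcomp Require Import all_boot all_order all_algebra.
From mathcomp Require Import boolp classical_sets reals ring.
Import Order.TTheory GRing.Theory Num.Theory.
Local Open Scope ring_scope.
Local Open Scope classical_set_scope.
Set Implicit Arguments. Unset Strict Implicit. Unset Printing Implicit Defensive.
Section Aux.
Variables (R : realType) (d : nat).
Notation intc := (map_mx (fun k : int => (k%:~R : R))).

Lemma intcB m n (a b : 'M[int]_(m,n)) : intc (a - b) = intc a - intc b.
Proof. by rewrite map_mxB. Qed.
Lemma intcM m n p (a : 'M[int]_(m,n)) (b : 'M[int]_(n,p)) : intc (a *m b) = intc a *m intc b.
Proof. by rewrite map_mxM. Qed.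
Lemma intcZ m n (c : int) (a : 'M[int]_(m,n)) : intc (c *: a) = c%:~R *: intc a.
Proof. by apply/matrixP => i j; rewrite !mxE intrM. Qed.

Lemma lat_sub (B : 'M[R]_d) a b : lattice_of B a -> lattice_of B b -> lattice_of B (a - b).
Proof. by move=> [za ->] [zb ->]; exists (za - zb); rewrite intcB mulmxBr. Qed.

Lemma image_lat (L B : 'M[R]_d) : (fun x => L *m x) @` lattice_of B = lattice_of (L *m B).
Proof.
apply/seteqP; split => x.
  by move=> [y [z ->] <-]; exists z; rewrite mulmxA.
move=> [z ->]; exists (B *m intc z); first by exists z.
by rewrite mulmxA.
Qed.

Lemma fin_idx (B' : 'M[R]_d) (m : nat) (H : set 'cV[R]_d) : (0 < m)%N ->
  (forall z : 'cV[int]_d, H (m%:R *: (B' *m intc z))) -> finite_index H (lattice_of B').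
Proof.
case: m => // m' _ Hm.
exists [seq B' *m intc (\col_i ((f i : nat)%:Z)) | f : {ffun 'I_d -> 'I_m'.+1} <- enum {ffun 'I_d -> 'I_m'.+1}].
move=> x [z ->].
pose r := \col_i (modz (z i 0) m'.+1). pose q := \col_i (divz (z i 0) m'.+1).
exists (B' *m intc r).
  apply/mapP; exists [ffun i => inord (absz (modz (z i 0) m'.+1))]; first by rewrite mem_enum.
  congr (_ *m _); apply/matrixP => i j; rewrite !mxE ffunE inordK.
    by rewrite gez0_abs ?modz_ge0.
  by rewrite -ltz_nat gez0_abs ?modz_ge0 // ltz_pmod.
have -> : B' *m intc z - B' *m intc r = m'.+1%:R *: (B' *m intc q).
  rewrite -mulmxBr -intcB scalemxAr; congr (_ *m _).
  have -> : z - r = (m'.+1)%:Z *: q.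
    apply/matrixP => i j; rewrite !mxE (ord1 j) {1}(divz_eq (z i 0) m'.+1).
    by rewrite addrK mulrC.
  by rewrite intcZ.
exact: Hm.
Qed.

Lemma pigeon (V : zmodType) (H : set V) (s : seq V) (x : nat -> V) :
 (forall a b, H a -> H b -> H (a - b)) ->
 (forall k, exists y, y \in s /\ H (x k - y)) ->
 exists k1 k2 : nat, k1 <> k2 /\ H (x k1 - x k2).
Proof.
move=> Hsub Hx.
have [f Hf] := fin_all_exists (fun k : 'I_(size s).+1 => Hx k).
pose g (k : 'I_(size s).+1) : 'I_(size s) :=
  Ordinal (etrans (index_mem _ _) (proj1 (Hf k))).
have Hinj : ~ injective g by move=> /leq_card; rewrite !card_ord ltnn.
apply: contrapT => Hn; apply: Hinj => k1 k2 Hg.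
apply: contrapT => Hne; apply: Hn; exists k1, k2; split.
  by move=> /val_inj.
have Hf12 : f k1 = f k2.
  have := congr1 val Hg => /= Hi.
  by rewrite -(nth_index 0 (proj1 (Hf k1))) Hi nth_index //; case: (Hf k2).
have -> : x k1 - x k2 = (x k1 - f k1) - (x k2 - f k2).
  by rewrite Hf12 opprB addrA subrK.
by apply: Hsub; [case: (Hf k1) | case: (Hf k2)].
Qed.
End Aux.
Section Key.
Variables (R : realType) (d : nat).
Notation intc := (map_mx (fun k : int => (k%:~R : R))).

Lemma intc_delta (j : 'I_d) : intc (delta_mx j (0 : 'I_1)) = delta_mx j 0.
Proof. by apply/matrixP => i k; rewrite !mxE; case: (_ && _). Qed.

Lemma K1 (B L : 'M[R]_d) : B \in unitmx ->
  finite_index (lattice_of B `&` lattice_of (L *m B)) (lattice_of (L *m B)) ->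
  exists Q0 : 'M[rat]_d, L *m B = B *m map_mx ratr Q0.
Proof.
move=> Bu [s Hs].
have col_ok : forall j : 'I_d, exists nw : int * 'cV[int]_d,
    nw.1 != 0 /\ nw.1%:~R *: (L *m B *m delta_mx j 0) = B *m intc nw.2.
  move=> j; set c := L *m B *m delta_mx j 0.
  have Hsub : forall a b, (lattice_of B `&` lattice_of (L *m B)) a ->
      (lattice_of B `&` lattice_of (L *m B)) b ->
      (lattice_of B `&` lattice_of (L *m B)) (a - b).
    by move=> a b [? ?] [? ?]; split; apply: lat_sub.
  have Hx : forall k : nat, exists y, y \in s /\
      (lattice_of B `&` lattice_of (L *m B)) (k%:R *: c - y).
    move=> k; have [|y ys Hy] := Hs (k%:R *: c); last by exists y.
    exists ((k%:Z) *: delta_mx j 0); rewrite intcZ intc_delta /c -scalemxAr.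
    by [].
  have [k1 [k2 [Hne [[w Hw] _]]]] := pigeon Hsub Hx.
  exists ((k1%:Z - k2%:Z), w); split.
    by rewrite /= subr_eq0 eqz_nat; apply/eqP.
  by rewrite /= -Hw intrB scalerBl.
have [F HF] := fin_all_exists col_ok.
exists (\matrix_(i, j) (((F j).2 i 0)%:~R / ((F j).1)%:~R)).
suff HQ : invmx B *m (L *m B) = map_mx ratr (\matrix_(i, j) (((F j).2 i 0)%:~R / ((F j).1)%:~R)).
  by rewrite -HQ mulKVmx.
set Q := invmx B *m (L *m B).
apply/matrixP => i j; rewrite [RHS]mxE [in RHS]mxE.
have [Hn Hw] := HF j.
have := congr1 (fun M => (invmx B *m M) i 0) Hw => /=.
rewrite mulKmx // -scalemxAr mxE mulmxA -/Q -colE !mxE => Heq.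
rewrite rmorphM /= fmorphV /= !ratr_int -Heq.
have Hn' : ((F j).1%:~R : R) != 0 by rewrite intr_eq0.
by rewrite mulrC mulKf.
Qed.
End Key.
Section Key2.
Variables (R : realType) (d : nat).
Notation intc := (map_mx (fun k : int => (k%:~R : R))).

Lemma denom (M : 'M[rat]_d) : exists m : nat, (0 < m)%N /\
  exists Z : 'M[int]_d, m%:R *: map_mx (@ratr R) M = intc Z.
Proof.
pose D (p : 'I_d * 'I_d) := absz (denq (M p.1 p.2)).
pose m := (\prod_(p : 'I_d * 'I_d) D p)%N.
have Dpos p : (0 < D p)%N by rewrite absz_gt0 denq_neq0.
exists m; split; first exact: prodn_gt0.
exists (\matrix_(i, j) ((m %/ D (i, j))%:Z * numq (M i j))).
apply/matrixP => i j; rewrite !mxE.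
have Hdv : (D (i, j) %| m)%N by rewrite /m (bigD1 (i, j)) //= dvdn_mulr.
have HD : (D (i, j))%:Z = denq (M i j) by rewrite gtz0_abs ?denq_gt0.
rewrite -{1}(divnK Hdv) natrM intrM -mulrA; congr (_ * _).
have H0 : ((denq (M i j))%:~R : R) != 0 by rewrite intr_eq0 denq_neq0.
rewrite /ratr -[(D (i, j))%:R]/(((D (i, j))%:Z)%:~R : R) HD mulrC divfK //.
Qed.
End Key2.
Section Key3.
Variables (R : realType) (d : nat).
Notation intc := (map_mx (fun k : int => (k%:~R : R))).

Lemma K2 (B L : 'M[R]_d) (Q0 : 'M[rat]_d) : B \in unitmx -> L \in unitmx ->
  L *m B = B *m map_mx ratr Q0 -> commensurate (lattice_of B) (lattice_of (L *m B)).
Proof.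
move=> Bu Lu HL.
set Q := map_mx (@ratr R) Q0.
have Qu : Q \in unitmx.
  have : L *m B \in unitmx by rewrite unitmx_mul Lu Bu.
  by rewrite HL unitmx_mul => /andP[].
have [m1 [m1p [Z1 HZ1]]] := denom R Q0.
have [m2 [m2p [Z2 HZ2]]] := denom R (invmx Q0).
have HB : L *m B *m invmx Q = B by rewrite HL mulmxK.
have HiQ : map_mx ratr (invmx Q0) = invmx Q by rewrite map_invmx.
have Hmain : forall z : 'cV[int]_d,
   (lattice_of B `&` lattice_of (L *m B)) ((muln m1 m2)%:R *: (B *m intc z)) /\
   (lattice_of B `&` lattice_of (L *m B)) ((muln m1 m2)%:R *: (L *m B *m intc z)).
  move=> z; split; split.
  - by exists ((Posz (muln m1 m2)) *: z); rewrite intcZ scalemxAr.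
  - exists (Posz m1 *: (Z2 *m z)).
    rewrite intcZ intcM -HZ2 HiQ -{1}HB natrM.
    by rewrite -!scalemxAr -!scalemxAl -?scalemxAr ?scalerA ?mulmxA.
  - exists (Posz m2 *: (Z1 *m z)).
    rewrite intcZ intcM -HZ1 HL natrM.
    rewrite -!scalemxAr -!scalemxAl -?scalemxAr ?scalerA ?mulmxA.
by rewrite mulrC.
  - by exists ((Posz (muln m1 m2)) *: z); rewrite intcZ scalemxAr.
have mp : (0 < m1 * m2)%N by rewrite muln_gt0 m1p.
by split; apply: (fin_idx mp) => z; case: (Hmain z).
Qed.
End Key3.
Section Main.
Variables (R : realType) (d : nat).
Notation intc := (map_mx (fun k : int => (k%:~R : R))).

Definition good (B L : 'M[R]_d) := exists Q0 : 'M[rat]_d, L *m B = B *m map_mx ratr Q0.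

Lemma comm_iff (B L : 'M[R]_d) : B \in unitmx -> L \in unitmx ->
  commensurate (lattice_of B) ((fun x => L *m x) @` lattice_of B) <-> good B L.
Proof.
move=> Bu Lu; rewrite image_lat; split => [[_ H]|[Q0 HQ]]; first exact: K1.
exact: K2 HQ.
Qed.

Lemma image_scale (a : R) (A : 'M[R]_d) (G : set 'cV[R]_d) :
  (fun x => a *: (A *m x)) @` G = (fun x => (a *: A) *m x) @` G.
Proof. by congr (_ @` _); apply: funext => x; rewrite scalemxAl. Qed.

Lemma good_mul B L1 L2 : good B L1 -> good B L2 -> good B (L1 *m L2).
Proof.
move=> [Q1 H1] [Q2 H2]; exists (Q1 *m Q2).
by rewrite -mulmxA H2 mulmxA H1 map_mxM mulmxA.
Qed.

Lemma good_inv B L : B \in unitmx -> L \in unitmx -> good B L -> good B (invmx L).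
Proof.
move=> Bu Lu [Q0 H].
have Qu : map_mx (@ratr R) Q0 \in unitmx.
  have : L *m B \in unitmx by rewrite unitmx_mul Lu Bu.
  by rewrite H unitmx_mul => /andP[].
exists (invmx Q0); rewrite map_invmx.
by rewrite -{1}(mulmxK Qu B) -H -!mulmxA mulKmx.
Qed.

Lemma good_scale B L (r : rat) : good B L -> good B (ratr r *: L).
Proof.
move=> [Q0 H]; exists (r *: Q0); rewrite -scalemxAl H scalemxAr; congr (_ *m _).
by apply/matrixP => i j; rewrite !mxE rmorphM.
Qed.

Lemma good_unscale B L (r : rat) : r != 0 -> good B (ratr r *: L) -> good B L.
Proof.
move=> r0 /(good_scale (r^-1)); rewrite scalerA -rmorphM /= mulVf //.
by rewrite rmorph1 scale1r.
Qed.

Lemma SO_unit (A : 'M[R]_d) : is_SO A -> A \in unitmx.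
Proof. by case=> _ HA; rewrite unitmxE HA unitr1. Qed.

Lemma SO_inv (A : 'M[R]_d) : is_SO A -> invmx A = A^T.
Proof.
move=> HS; have Au := SO_unit HS; case: HS => H1 _.
by rewrite -[invmx A]mul1mx -H1 -mulmxA mulmxV // mulmx1.
Qed.

Lemma SO_mul (A C : 'M[R]_d) : is_SO A -> is_SO C -> is_SO (A *m C).
Proof.
move=> [HA1 HA2] [HC1 HC2]; split; last by rewrite det_mulmx HA2 HC2 mulr1.
by rewrite trmx_mul mulmxA -(mulmxA C^T) HA1 mulmx1 HC1.
Qed.

Lemma SO_invmx (A : 'M[R]_d) : is_SO A -> is_SO (invmx A).
Proof.
move=> HS; rewrite SO_inv //; case: HS => H1 H2; split; last by rewrite det_tr.
by rewrite trmxK; apply: mulmx1C.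
Qed.

Lemma norm0 (v : 'cV[R]_d) : (v^T *m v) 0 0 = 0 -> v = 0.
Proof.
rewrite mxE => H; apply/matrixP => i j; rewrite (ord1 j) mxE.
have Hn : forall k : 'I_d, true -> 0 <= v^T 0 k * v k 0.
  by move=> k _; rewrite mxE -expr2 sqr_ge0.
have := @psumr_eq0P R _ predT (fun k => v^T 0 k * v k 0) Hn H i isT.
by rewrite mxE => /eqP; rewrite mulf_eq0 orbb => /eqP.
Qed.

Lemma trZ (c : R) (M : 'cV[R]_d) : (c *: M)^T = c *: M^T.
Proof. by apply/matrixP => i j; rewrite !mxE. Qed.

Lemma sq_rat (B A : 'M[R]_d) (a : R) : (0 < d)%N -> B \in unitmx ->
  rational_norms (lattice_of B) -> is_SO A -> good B (a *: A) -> a != 0 ->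
  exists r : rat, r != 0 /\ a ^+ 2 = ratr r.
Proof.
move=> d0 Bu Hrat [HA _] [Q0 HQ] a0.
have [m [mp [Z HZ]]] := denom R Q0.
pose i0 : 'I_d := Ordinal d0.
pose e : 'cV[R]_d := delta_mx i0 0.
pose x := B *m e.
have Hx : lattice_of B x by exists (delta_mx i0 0); rewrite intc_delta.
have Hy : lattice_of B (m%:R *: ((a *: A) *m x)).
  exists (Z *m delta_mx i0 0); rewrite intcM -HZ intc_delta /x mulmxA HQ.
  by rewrite -scalemxAl -scalemxAr mulmxA.
have [qx Hqx] := Hrat _ Hx; have [qy Hqy] := Hrat _ Hy.
have Hyx : ((m%:R *: (a *: A *m x))^T *m (m%:R *: (a *: A *m x))) 0 0
    = (m%:R * a) ^+ 2 * (x^T *m x) 0 0.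
  rewrite -scalemxAl scalerA trZ -scalemxAl -scalemxAr scalerA trmx_mul mulmxA.
  by rewrite -(mulmxA x^T) HA mulmx1 mxE expr2.
have nx0 : (x^T *m x) 0 0 != 0.
  apply/eqP => /norm0 x0.
  have : invmx B *m x = e by rewrite /x mulKmx.
  rewrite x0 mulmx0 => /matrixP /(_ i0 0); rewrite !mxE !eqxx /= => /eqP.
  by rewrite eq_sym oner_eq0.
have m0 : (m%:R : R) != 0 by rewrite pnatr_eq0 -lt0n.
have Ha2 : a ^+ 2 = ratr (qy / (m%:R ^+ 2 * qx)).
  rewrite rmorphM fmorphV rmorphM rmorphXn /= ratr_nat -Hqy -Hqx Hyx.
  by field; rewrite nx0 m0.
exists (qy / (m%:R ^+ 2 * qx)); split => //.
apply/eqP => r0; move: Ha2; rewrite r0 rmorph0 => /eqP.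
by rewrite expf_eq0 /= (negbTE a0).
Qed.
End Main.
Theorem mainTheorem5 (R : realType) (d : nat) (G : set 'cV[R]_d) :
  (2 <= d)%N -> is_lattice G -> rational_norms G ->
  [/\ (~~ odd d -> quot_elem_abelian2 (SOC G) (SOS G)),
      (odd d -> SOS G = SOC G) &
      (forall A, SOS G A -> SOC G (A *m A))].
Proof.
move=> d2 [B [Bu ->]] Hrat.
have d0 : (0 < d)%N by apply: leq_trans d2.
have SOS_good : forall A, SOS (lattice_of B) A -> is_SO A /\
    exists a : R, 0 < a /\ good B (a *: A) /\
      exists r : rat, r != 0 /\ a ^+ 2 = ratr r.
  move=> A [HSO [a a0 Hc]]; split => //; exists a; split => //.
  have a0' : a != 0 by rewrite gt_eqF.
  rewrite image_scale in Hc.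
  have Hg : good B (a *: A).
    apply/(comm_iff Bu _).1 => //.
    by rewrite unitmxZ ?unitfE // SO_unit.
  by split => //; apply: sq_rat Hg a0'.
have SOC_of : forall A, is_SO A -> good B A -> SOC (lattice_of B) A.
  by move=> A HA Hg; split => //; apply/(comm_iff Bu (SO_unit HA)).2.
have Hsq : forall A, SOS (lattice_of B) A -> SOC (lattice_of B) (A *m A).
  move=> A /SOS_good [HSO [a [a0 [Hg [r [r0 Hr]]]]]].
  apply: SOC_of; first exact: SO_mul.
  apply: (good_unscale r0); rewrite -Hr.
  have -> : a ^+ 2 *: (A *m A) = (a *: A) *m (a *: A).
    by rewrite -scalemxAl -scalemxAr scalerA expr2.
  exact: good_mul.
split => //.
- move=> _ A C HA HC; split; last exact: Hsq.
  have [SA [a [a0 [Ga _]]]] := SOS_good _ HA.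
  have [SC [c [c0 [Gc _]]]] := SOS_good _ HC.
  apply: SOC_of.
    exact: SO_mul (SO_mul (SO_mul SA SC) (SO_invmx SA)) (SO_invmx SC).
  have au : a \is a GRing.unit by rewrite unitfE gt_eqF.
  have cu : c \is a GRing.unit by rewrite unitfE gt_eqF.
  have aAu : a *: A \in unitmx by rewrite unitmxZ // SO_unit.
  have cCu : c *: C \in unitmx by rewrite unitmxZ // SO_unit.
  have -> : A *m C *m invmx A *m invmx C =
      (a *: A) *m (c *: C) *m invmx (a *: A) *m invmx (c *: C).
    rewrite !invmxZ // -!scalemxAl -!scalemxAr -?scalemxAl ?scalerA.
    have -> : a * (c^-1 / a * c) = 1.
      by field; rewrite -!unitfE au cu.
    by rewrite scale1r.
  apply: good_mul; last exact: good_inv.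
  apply: good_mul; last exact: good_inv.
  exact: good_mul.
- move=> dodd; apply/seteqP; split => A.
  + move=> /SOS_good [HSO [a [a0 [[Q0 HQ] [r [r0 Hr]]]]]].
    have dB0 : \det B != 0 by rewrite -unitfE -unitmxE.
    have Hdet : a ^+ d = ratr (\det Q0).
      have := congr1 determinant HQ.
      rewrite !det_mulmx detZ (proj2 HSO) mulr1 det_map_mx /= [RHS]mulrC => H.
      exact: (mulIf dB0).
    have dd : d = (d./2).*2.+1 by rewrite -{1}(odd_double_half d) dodd.
    have a0' : a != 0 by rewrite gt_eqF.
    have Ha : a = ratr (\det Q0 / r ^+ d./2).
      have Hd' : a ^+ d = a * (a ^+ 2) ^+ d./2.
        by rewrite {1}dd exprS -mul2n exprM.
      rewrite rmorphM fmorphV rmorphXn /= -Hr -Hdet Hd' mulfK //.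
      by rewrite !expf_neq0.
    apply: SOC_of => //.
    apply: (@good_unscale _ _ _ _ (\det Q0 / r ^+ d./2)).
      by apply/eqP => s0; move: Ha; rewrite s0 rmorph0; apply/eqP.
    by rewrite -Ha; exists Q0.
  + move=> [HSO Hc]; split => //; exists 1 => //.
    by rewrite image_scale scale1r.
Qed.
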